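(* Let $X$ be a real Banach space and $Q:X^{**}\to X^{**}$ a projection with $Q[X^{**}]=\kappa_X(X)$ such that $\|f\|>\|f-Qf\|$ for every $f\notin\ker Q$. If $G$ is a group acting on $X$ by affine isometries, then $\pi(g)f\in\ker Q$ for every $g\in G$ and $f\in\ker Q$, where $\pi$ acts on $X^{**}$ by the bidual of the linear part of the action.
   Context: $\kappa_X$ is the canonical embedding of $X$ into $X^{**}$. For an action by affine isometries $(g,x)\mapsto gx$, $\pi(g)x:=gx-g0$ is its linear part (an action by linear surjective isometries); it acts on $X^*$ by $(\pi(g)x^* )(x)=x^*(\pi(g^{-1})x)$ and on $X^{**}$ by $(\pi(g)\zeta)(x^* )=\zeta(\pi(g^{-1})x^* )$, extending the action on $X$. *)

(* Defs.v *)
From HB Require Import structures.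
From mathcomp Require Import all_boot all_order all_algebra.
From mathcomp Require Import all_classical all_reals all_analysis.
From mathcomp Require Import monoid.
Set Implicit Arguments. Unset Strict Implicit. Unset Printing Implicit Defensive.
Import Order.TTheory GRing.Theory Num.Theory.
Import numFieldNormedType.Exports.
Local Open Scope classical_set_scope.
Local Open Scope ring_scope.

Section Bidual.
Variables (R : realType) (X : normedModType R).

Definition lin_functional (f : X -> R) : Prop :=
  forall (a : R) (x y : X), f (a *: x + y) = a * f x + f y.

Record dual := Dual {
  dual_fun :> X -> R;
  dual_lin : lin_functional dual_fun;
  dual_cont : continuous dual_fun }.

Definition dnorm (d : dual) : R :=
  sup [set `|d x| | x in [set x : X | `|x| <= 1]].

Definition lin_on_dual (z : dual -> R) : Prop :=
  forall (a : R) (d1 d2 d3 : dual),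
    (forall x, d3 x = a * d1 x + d2 x) -> z d3 = a * z d1 + z d2.

(* X^** : bounded (= continuous) linear functionals on X^*; an element of X^**
   is a function  dual -> R  satisfying  is_bidual *)
Definition is_bidual (z : dual -> R) : Prop :=
  lin_on_dual z /\ exists M : R, forall d : dual, `|z d| <= M * dnorm d.

Definition bnorm (z : dual -> R) : R :=
  sup [set `|z d| | d in [set d : dual | dnorm d <= 1]].

Definition kappa (x : X) : dual -> R := fun d => d x.

(* composition x^* o T as an element of X^*; T is meant to be a bounded
   linear operator (junk value d when it is not) *)
Lemma comp_dual_lin (d : dual) (T : X -> X) :
  (forall a x y, T (a *: x + y) = a *: T x + T y) ->
  lin_functional (fun x => d (T x)).
Proof. by move=> HT a x y; rewrite HT dual_lin. Qed.

Lemma comp_dual_cont (d : dual) (T : X -> X) :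
  continuous T -> continuous (fun x => d (T x)).
Proof.
move=> HT x; apply: continuous_comp; first exact: HT.
exact: dual_cont.
Qed.

Definition comp_dual (d : dual) (T : X -> X) : dual :=
  match pselect ((forall a x y, T (a *: x + y) = a *: T x + T y)
                 /\ continuous T) with
  | left H => @Dual (fun x => d (T x)) (@comp_dual_lin d T (proj1 H)) (@comp_dual_cont d T (proj2 H))
  | right _ => d
  end.

End Bidual.

Section Action.
Variables (R : realType) (X : normedModType R) (G : groupType).

Definition affine_isometric_action (act : G -> X -> X) : Prop :=
  [/\ forall x, act 1%g x = x,
      forall g h x, act (g * h)%g x = act g (act h x),
      forall g (t : R) x y,
        act g (t *: x + (1 - t) *: y) = t *: act g x + (1 - t) *: act g y
    & forall g x y, `|act g x - act g y| = `|x - y|].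

Definition lin_part (act : G -> X -> X) (g : G) (x : X) : X :=
  act g x - act g 0.

Definition dual_act (act : G -> X -> X) (g : G) (d : dual X) : dual X :=
  comp_dual d (lin_part act (g^-1)%g).

Definition bidual_act (act : G -> X -> X) (g : G) (z : dual X -> R)
  : dual X -> R :=
  fun d => z (dual_act act (g^-1)%g d).

End Action.

(* Main.v *)
Require Import Defs.
From HB Require Import structures.
From mathcomp Require Import all_boot all_order all_algebra.
From mathcomp Require Import all_classical all_reals all_analysis.
From mathcomp Require Import monoid.
From mathcomp Require Import ring lra.
Import Order.TTheory GRing.Theory Num.Theory.
Import numFieldNormedType.Exports.
Local Open Scope classical_set_scope.
Local Open Scope ring_scope.

Set Implicit Arguments.
Section S.
Variables (R : realType) (X : normedModType R) (G : groupType) (act : G -> X -> X).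
Hypothesis Hact : affine_isometric_action act.

Lemma L_norm g x : `|lin_part act g x| = `|x|.
Proof. case: Hact => _ _ _ H4; by rewrite /lin_part H4 subr0. Qed.

Lemma L_homo g (t : R) x : lin_part act g (t *: x) = t *: lin_part act g x.
Proof.
case: Hact => _ _ H3 _; rewrite /lin_part.
have -> : t *: x = t *: x + (1 - t) *: (0:X) by rewrite scaler0 addr0.
by rewrite H3 scalerBl scale1r scalerBr addrCA addrAC subrr add0r.
Qed.

Lemma L_add g x y : lin_part act g (x + y) = lin_part act g x + lin_part act g y.
Proof.
have H3 : forall (t : R) x y,
    act g (t *: x + (1 - t) *: y) = t *: act g x + (1 - t) *: act g y.
  by case: Hact.
have h2 : (1 - 2^-1 : R) = 2^-1.
  by field.
have -> : x + y = 2^-1 *: ((2:R) *: x) + (1 - 2^-1) *: ((2:R) *: y).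
  by rewrite h2 !scalerA mulVf ?pnatr_eq0 // !scale1r.
have hE z : lin_part act g z = 2^-1 *: lin_part act g ((2:R) *: z).
  by rewrite L_homo scalerA mulVf ?pnatr_eq0 // scale1r.
rewrite (hE x) (hE y) /lin_part H3 h2.
have hc : act g 0 = 2^-1 *: act g 0 + 2^-1 *: act g 0.
  have h22 : (2^-1 + 2^-1 : R) = 1 by field.
  by rewrite -scalerDl h22 scale1r.
rewrite {1}hc opprD addrACA !scalerBr //.
Qed.

Lemma L_lin g (a : R) x y :
  lin_part act g (a *: x + y) = a *: lin_part act g x + lin_part act g y.
Proof. by rewrite L_add L_homo. Qed.

Lemma L_cont g : continuous (lin_part act g).
Proof.
move=> x; apply/cvgrPdist_lt => e e0.
apply: filterS (@cvgr_dist_lt _ _ _ _ _ id x cvg_id e e0) => t /=.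
have -> : lin_part act g x - lin_part act g t = lin_part act g ((-1) *: t + x).
  by rewrite L_lin scaleN1r addrC.
by rewrite L_norm scaleN1r addrC.
Qed.

Lemma L_inv g y : lin_part act g (lin_part act (g^-1)%g y) = y.
Proof.
case: Hact => H1 H2 _ _.
have -> : lin_part act g^-1 y = (-1) *: act g^-1%g 0 + act g^-1%g y.
  by rewrite /lin_part scaleN1r addrC.
rewrite L_lin scaleN1r.
rewrite /lin_part -!H2 mulgV !H1.
by rewrite sub0r opprK addrC subrK.
Qed.

Lemma dual_ext (d1 d2 : dual X) : (forall x, d1 x = d2 x) -> d1 = d2.
Proof.
case: d1 d2 => f1 l1 c1 [f2 l2 c2] /= H.
have E : f1 = f2 by apply: funext.
subst f2; congr Dual; exact: Prop_irrelevance.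
Qed.

Lemma dual_actE g (d : dual X) x : dual_act act g d x = d (lin_part act (g^-1)%g x).
Proof.
rewrite /dual_act /comp_dual; case: pselect => [H|[]] //; split.
  exact: L_lin.
exact: L_cont.
Qed.

Lemma dual_act_inv g (d : dual X) : dual_act act g (dual_act act (g^-1)%g d) = d.
Proof. by apply: dual_ext => x; rewrite !dual_actE invgK L_inv. Qed.

Lemma dnorm_act g (d : dual X) : dnorm (dual_act act g d) = dnorm d.
Proof.
rewrite /dnorm; congr sup; apply/seteqP; split => _ [x /= hx <-].
  by exists (lin_part act (g^-1)%g x); rewrite /= ?L_norm // dual_actE.
exists (lin_part act g x); rewrite /= ?L_norm // dual_actE.
by rewrite -{2}(invgK g) L_inv.
Qed.

Lemma bnorm_act g (z : dual X -> R) : bnorm (bidual_act act g z) = bnorm z.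
Proof.
rewrite /bnorm /bidual_act; congr sup; apply/seteqP; split => _ [d /= hd <-].
  by exists (dual_act act (g^-1)%g d); rewrite /= ?dnorm_act.
exists (dual_act act g d); rewrite /= ?dnorm_act //.
by have := dual_act_inv (g^-1)%g d; rewrite invgK => ->.
Qed.

Lemma bid_act g (z : dual X -> R) : is_bidual z -> is_bidual (bidual_act act g z).
Proof.
case=> Hl [M HM]; split; last first.
  by exists M => d; rewrite /bidual_act -(dnorm_act (g^-1)%g d); apply: HM.
move=> a d1 d2 d3 H; rewrite /bidual_act; apply: Hl => x.
by rewrite !dual_actE H.
Qed.

End S.

Lemma bid_comb (R : realType) (X : normedModType R) (a : R) (f h : dual X -> R) :
  is_bidual f -> is_bidual h -> is_bidual (fun d => a * f d + h d).
Proof.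
case=> Hf [M1 HM1] [Hh [M2 HM2]]; split.
  move=> b d1 d2 d3 H; rewrite (Hf b d1 d2 d3 H) (Hh b d1 d2 d3 H).
  by rewrite mulrDr mulrDr mulrA mulrA (mulrC a b); rewrite addrACA.
exists (`|a| * M1 + M2) => d.
apply: (le_trans (ler_normD _ _)); rewrite mulrDl -mulrA normrM.
by apply: lerD => //; apply: ler_wpM2l.
Qed.


Unset Implicit Arguments.

Theorem lemma3p5 (R : realType) (X : completeNormedModType R)
  (Q : (dual X -> R) -> (dual X -> R))
  (HQbid : forall f, is_bidual f -> is_bidual (Q f))
  (HQlin : forall (a : R) f h, is_bidual f -> is_bidual h ->
     Q (fun d => a * f d + h d) = (fun d => a * Q f d + Q h d))
  (HQidem : forall f, is_bidual f -> Q (Q f) = Q f)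
  (HQrange : [set Q f | f in [set f | is_bidual f]] = range (@kappa R X))
  (HQnorm : forall f, is_bidual f -> Q f <> (fun _ => 0) ->
     bnorm (fun d => f d - Q f d) < bnorm f)
  (G : groupType) (act : G -> X -> X)
  (Hact : affine_isometric_action act) :
  forall (g : G) (f : dual X -> R), is_bidual f -> Q f = (fun _ => 0) ->
    Q (bidual_act act g f) = (fun _ => 0).
Proof.
move=> g f bf Qf.
have bh : is_bidual (bidual_act act g f) := bid_act Hact g bf.
have Qk y : is_bidual (kappa y) /\ Q (kappa y) = kappa y.
  have : range (@kappa R X) (kappa y) by exists y.
  rewrite -HQrange => -[f' bf' <-]; split; [exact: HQbid | exact: HQidem].
have key y : bnorm f <= bnorm (fun d => (-1) * kappa y d + f d).
  have [bk Qky] := Qk y.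
  have [k0 | k0] := pselect (kappa y = (fun _ => 0)).
    have -> : (fun d => -1 * kappa y d + f d) = f.
      by apply: funext => d; rewrite k0 mulr0 add0r.
    by [].
  apply: ltW.
  have bz := bid_comb (-1) bk bf.
  have Qz : Q (fun d => -1 * kappa y d + f d) = (fun d => -1 * kappa y d).
    by rewrite HQlin // Qky Qf; apply: funext => d; rewrite addr0.
  have := HQnorm _ bz; rewrite Qz.
  have -> : (fun d => -1 * kappa y d + f d - -1 * kappa y d) = f.
    by apply: funext => d; rewrite addrC addKr.
  apply => E; apply: k0; apply: funext => d.
  have := congr1 (fun F => F d) E; rewrite /= mulN1r => /eqP.
  by rewrite oppr_eq0 => /eqP.
apply: contrapT => Qh.
have [y Ey] : exists y, kappa y = Q (bidual_act act g f).
  have : [set Q f | f in [set f | is_bidual f]] (Q (bidual_act act g f)).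
    by exists (bidual_act act g f).
  by rewrite HQrange => -[y _ Ey]; exists y.
have lt := HQnorm _ bh Qh; rewrite -Ey in lt.
pose y' := lin_part act (g^-1)%g y.
have E : (fun d => bidual_act act g f d - kappa y d)
    = bidual_act act g (fun d => -1 * kappa y' d + f d).
  apply: funext => d; rewrite /bidual_act /kappa dual_actE // invgK /y' L_inv //.
  by rewrite mulN1r addrC.
rewrite E !bnorm_act // in lt.
have := lt_le_trans lt (key y'); by rewrite ltxx.
Qed.
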